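(* In the reset-button collector, for all complex $z$ with $|z|\le1$, \[\mathbb Ez^{T_n}=\frac{(1-q_nz)\phi_n(q_nz)}{1-z+\rho_nz\phi_n(q_nz)}.\] The same identity also holds, with finite value, for any real $z\ge0$ such that $q_nz<1$ and $1-z+\rho_nz\phi_n(q_nz)>0$.
   Context: Reset-button collector: fix $n\ge1$. There are standard coupons $1,\dots,n$ and a reset coupon. At each discrete time $t=1,2,\dots$ one coupon is sampled independently: the reset coupon with probability $\rho_n\in(0,1)$, standard coupon $i$ with probability $p_{i,n}>0$, where $\sum_ip_{i,n}=q_n:=1-\rho_n$. Starting from the empty collection, drawn standard coupons are added; a reset empties the collection and collecting continues. $T_n$ is the first time all $n$ standard coupons are present. $C_n$ is the ordinary coupon collector completion time (number of i.i.d. draws until all types seen) with type probabilities $\pi_{i,n}=p_{i,n}/q_n$, and $\phi_n(z)=\mathbb Ez^{C_n}$. *)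

(* Defs.v *)
From HB Require Import structures.
From mathcomp Require Import all_boot all_order all_algebra.
From mathcomp Require Import Rstruct.
From Stdlib Require Import Reals.

Set Implicit Arguments.
Unset Strict Implicit.
Unset Printing Implicit Defensive.
Import GRing.Theory Num.Theory.

Local Open Scope ring_scope.

(* Collection after processing a word of draws: [None] is the reset coupon,
   [Some i] is standard coupon i. *)
Definition rb_step (n : nat) (S : {set 'I_n}) (x : option 'I_n) : {set 'I_n} :=
  if x is Some i then i |: S else set0.

Definition rb_state (n : nat) (w : seq (option 'I_n)) : {set 'I_n} :=
  foldl (@rb_step n) set0 w.

Definition rb_first_complete (n : nat) (w : seq (option 'I_n)) : bool :=
  (rb_state w == [set: 'I_n]) &&
  [forall k : 'I_(size w), rb_state (take k w) != [set: 'I_n]].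

Definition cc_state (n : nat) (w : seq 'I_n) : {set 'I_n} := [set x in w].

Definition cc_first_complete (n : nat) (w : seq 'I_n) : bool :=
  (cc_state w == [set: 'I_n]) &&
  [forall k : 'I_(size w), cc_state (take k w) != [set: 'I_n]].

Definition rb_prob (n : nat) (rho : R) (p : 'I_n -> R) (x : option 'I_n) : R :=
  if x is Some i then p i else rho.

Definition rb_T_law (n : nat) (rho : R) (p : 'I_n -> R) (t : nat) : R :=
  \sum_(w : t.-tuple (option 'I_n) | rb_first_complete w)
     \prod_(x <- w) rb_prob rho p x.

(* P(C_n = t) for the ordinary collector with type probabilities
   pi_i = p_i / q, q = 1 - rho. *)
Definition cc_C_law (n : nat) (rho : R) (p : 'I_n -> R) (t : nat) : R :=
  \sum_(w : t.-tuple 'I_n | cc_first_complete w)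
     \prod_(i <- w) (p i / (1 - rho)).

Definition rb_model (n : nat) (rho : R) (p : 'I_n -> R) : Prop :=
  leq 1 n /\ 0 < rho < 1 /\ (forall i, 0 < p i) /\
  \sum_(i < n) p i = 1 - rho.

(* Main.v *)
Require Import Defs.
From HB Require Import structures.
From mathcomp Require Import all_boot all_order all_algebra.
From mathcomp Require Import Rstruct.
From Stdlib Require Import Reals Lra.
From Coquelicot Require Import Coquelicot.

Set Implicit Arguments.
Unset Strict Implicit.
Unset Printing Implicit Defensive.
Import Order.TTheory GRing.Theory Num.Theory.

Section Generic.
Local Open Scope ring_scope.

Lemma forall_ordS m (P : nat -> bool) :
  [forall k : 'I_m.+1, P k] = P 0%N && [forall k : 'I_m, P k.+1].
Proof.
apply/idP/idP.
- move/forallP => H. apply/andP; split; first exact: (H ord0).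
  apply/forallP => k. exact: (H (lift ord0 k)).
- case/andP => H0 /forallP H. apply/forallP => -[[|k] Hk] //=.
  have Hk2 : leq k.+1 m by []. exact: (H (Ordinal Hk2)).
Qed.

Lemma forall_ord0 (P : nat -> bool) : [forall k : 'I_0, P k] = true.
Proof. by apply/forallP => -[]. Qed.

Lemma sum_tuple0 (T : finType) (P : seq T -> bool) (F : seq T -> R) :
  \sum_(w : 0.-tuple T | P w) F w = if P [::] then F [::] else 0.
Proof.
rewrite big_mkcond (big_pred1 [tuple]) //= => w.
symmetry; apply/eqP; exact: tuple0.
Qed.

Lemma sum_tuple_cons (T : finType) m (P : seq T -> bool) (F : seq T -> R) :
  \sum_(w : m.+1.-tuple T | P w) F w =
  \sum_(x : T) \sum_(w : m.-tuple T | P (x :: w)) F (x :: w).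
Proof.
rewrite pair_big_dep /=.
rewrite (reindex (fun pr : T * m.-tuple T => [tuple of pr.1 :: pr.2])) /=.
- by apply: eq_bigl => -[x w].
- exists (fun w : m.+1.-tuple T => (thead w, [tuple of behead w])) => [[x w] _|w _] /=.
  + by rewrite theadE; congr pair; apply: val_inj.
  + by rewrite [in RHS](tuple_eta w).
Qed.

Lemma sum_option (T : finType) (G : option T -> R) :
  \sum_(x : option T) G x = G None + \sum_(i : T) G (Some i).
Proof.
rewrite (bigD1 None) //=. congr (_ + _).
rewrite (reindex_omap Some (fun x : option T => x)) /=.
- by apply: eq_bigl => i; rewrite eqxx.
- by move=> [i|] //=.
Qed.

End Generic.

Section Comb.
Local Open Scope ring_scope.
Lemma sum_rearr (I : finType) (p f : I -> R) (r x : R) :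
  (\sum_i p i * (r * f i * x) = r * (\sum_i p i * f i) * x).
Proof. rewrite mulr_sumr mulr_suml. apply: eq_bigr => i _. by rewrite !mulrA [p i * r]mulrC. Qed.

Variables (n : nat) (rho : R) (p : 'I_n -> R).

Fixpoint fcr (S : {set 'I_n}) (w : seq (option 'I_n)) : bool :=
  match w with
  | [::] => S == setT
  | x :: w' => (S != setT) && fcr (rb_step S x) w'
  end.

Fixpoint fcc (S : {set 'I_n}) (w : seq 'I_n) : bool :=
  match w with
  | [::] => S == setT
  | x :: w' => (S != setT) && fcc (x |: S) w'
  end.

Lemma fcr_correct S w :
  (foldl (@rb_step n) S w == setT) &&
  [forall k : 'I_(size w), foldl (@rb_step n) S (take k w) != setT] = fcr S w.
Proof.
elim: w S => [|x w IH] S /=.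
- case: (S == setT) => //=. by apply/forallP => -[].
- rewrite (forall_ordS (size w) (fun k => foldl (@rb_step n) S (take k (x :: w)) != setT)) /= -IH.
  by rewrite andbCA.
Qed.

Lemma fcc_correct S w :
  (S :|: [set y in w] == setT) &&
  [forall k : 'I_(size w), S :|: [set y in take k w] != setT] = fcc S w.
Proof.
elim: w S => [|x w IH] S /=.
- have -> : S :|: [set y in [::]] = S by apply/setP => y; rewrite !inE orbF.
  case: (S == setT) => //=. by apply/forallP => -[].
- rewrite (forall_ordS (size w) (fun k => S :|: [set y in take k (x :: w)] != setT)) /= -IH.
  have E : forall s : seq 'I_n, S :|: [set y in x :: s] = (x |: S) :|: [set y in s].
  { move=> s. apply/setP => y. rewrite !inE. by rewrite orbCA orbA. }
  have E0 : S :|: [set y in [::]] = S.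
  { apply/setP => y. by rewrite !inE in_nil orbF. }
  rewrite E E0 (@eq_forallb _ _ (fun k : 'I_(size w) => (x |: S) :|: [set y in take k w] != setT)).
  + by rewrite andbCA.
  + by move=> k /=; rewrite E.
Qed.

Definition Fs t S := \sum_(w : t.-tuple (option 'I_n) | fcr S w) \prod_(x <- w) rb_prob rho p x.
Definition As t S := \sum_(w : t.-tuple 'I_n | fcc S w) \prod_(i <- w) p i.
Fixpoint Ur m S : R :=
  match m with
  | O => if S == setT then 0 else 1
  | m'.+1 => \sum_(i : 'I_n) p i * Ur m' (i |: S)
  end.

Lemma Fs0 S : Fs 0 S = if S == setT then 1 else 0.
Proof. by rewrite /Fs (sum_tuple0 (fcr S) (fun w => \prod_(x <- w) rb_prob rho p x)) /= big_nil. Qed.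

Lemma As0 S : As 0 S = if S == setT then 1 else 0.
Proof. by rewrite /As (sum_tuple0 (fcc S) (fun w => \prod_(i <- w) p i)) /= big_nil. Qed.

Lemma FsS t S : Fs t.+1 S =
  if S == setT then 0 else rho * Fs t set0 + \sum_(i : 'I_n) p i * Fs t (i |: S).
Proof.
rewrite /Fs (sum_tuple_cons t (fcr S) (fun w => \prod_(x <- w) rb_prob rho p x)). case: eqP => [->|HS].
- rewrite big1 // => x _. rewrite big_pred0 // => w /=. by rewrite eqxx.
- have HS' : S != setT by apply/eqP.
  have E : forall x, \sum_(w : t.-tuple _ | fcr S (x :: w)) \prod_(y <- x :: w) rb_prob rho p y
          = rb_prob rho p x * Fs t (rb_step S x).
  { move=> x. rewrite /Fs mulr_sumr. apply: eq_big => [w|w _]; first by rewrite /= HS'.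
    by rewrite big_cons. }
  rewrite (eq_bigr _ (fun x _ => E x)) sum_option /=. by [].
Qed.

Lemma AsS t S : As t.+1 S =
  if S == setT then 0 else \sum_(i : 'I_n) p i * As t (i |: S).
Proof.
rewrite /As (sum_tuple_cons t (fcc S) (fun w => \prod_(i <- w) p i)). case: eqP => [->|HS].
- rewrite big1 // => x _. rewrite big_pred0 // => w /=. by rewrite eqxx.
- have HS' : S != setT by apply/eqP.
  apply: eq_bigr => x _. rewrite mulr_sumr. apply: eq_big => [w|w _]; first by rewrite /= HS'.
  by rewrite big_cons.
Qed.

Lemma setU1T (i : 'I_n) : i |: [set: 'I_n] = setT.
Proof. apply/setP => y. by rewrite !inE orbT. Qed.

Lemma UrS m S : Ur m.+1 S = \sum_(i : 'I_n) p i * Ur m (i |: S).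
Proof. by []. Qed.

Lemma Ur_setT m : Ur m setT = 0.
Proof.
elim: m => [|m IH] /=; first by rewrite eqxx.
apply: big1 => i _. by rewrite setU1T IH mulr0.
Qed.

Lemma As_setT t : As t.+1 setT = 0.
Proof. by rewrite AsS eqxx. Qed.

Lemma renewal t S :
  Fs t S = As t S + \sum_(j < t) rho * Ur j S * Fs (t - j.+1) set0.
Proof.
elim: t S => [|t IH] S.
- by rewrite Fs0 As0 big_ord0 addr0.
- rewrite FsS AsS. case: eqP => [->|HS].
  + rewrite big1 ?addr0 // => j _. by rewrite Ur_setT mulr0 mul0r.
  + rewrite big_ord_recl /=. have HS' : (S == setT) = false by apply/eqP.
    rewrite HS' mulr1 subn1 /=.
    under eq_bigr => i _ do rewrite IH mulrDr.
    rewrite big_split /= addrCA. congr (_ + _). congr (_ + _).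
    under eq_bigr => i _ do rewrite mulr_sumr.
    rewrite exchange_big /=. apply: eq_bigr => j _.
    rewrite /bump /= ?add1n ?add0n !subSS. exact: sum_rearr.
Qed.

Hypothesis Hsum : \sum_(i < n) p i = 1 - rho.

Lemma UA0 S : Ur 0 S = 1 - As 0 S.
Proof. rewrite As0 /=. case: (S == setT); by rewrite ?subrr ?subr0. Qed.

Lemma UA_rel m S : Ur m.+1 S = (1 - rho) * Ur m S - As m.+1 S.
Proof.
elim: m S => [|m IH] S.
- rewrite AsS. case: eqP => [->|HS].
  + rewrite /= eqxx mulr0 subr0. apply: big1 => i _. by rewrite setU1T eqxx mulr0.
  + have HS' : (S == setT) = false by apply/eqP.
    rewrite [Ur 0 S]/= HS' mulr1 -Hsum -sumrB /=. apply: eq_bigr => i _.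
    rewrite As0; case: (_ == _); rewrite ?mulr0 ?mulr1 ?subrr ?subr0 //.
- rewrite UrS. under eq_bigr => i _ do rewrite IH mulrBr.
  rewrite sumrB (UrS m) mulr_sumr. congr (_ - _).
  + apply: eq_bigr => i _. by rewrite mulrCA.
  + rewrite AsS. case: eqP => [->|_] //. apply: big1 => i _. by rewrite setU1T As_setT mulr0.
Qed.

Hypothesis Hp : forall i, 0 < p i.
Hypothesis Hrho0 : 0 < rho.
Hypothesis Hrho1 : rho < 1.

Lemma As_ge0 t S : 0 <= As t S.
Proof. apply: sumr_ge0 => w _. apply: prodr_ge0 => i _. exact: ltW. Qed.

Lemma Fs_ge0 t S : 0 <= Fs t S.
Proof. apply: sumr_ge0 => w _. apply: prodr_ge0 => -[i|] _ /=; exact: ltW. Qed.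

Lemma Ur_ge0 m S : 0 <= Ur m S.
Proof.
elim: m S => [|m IH] S /=; first by case: (_ == _); rewrite ?lexx ?ler01.
apply: sumr_ge0 => i _. apply: mulr_ge0; [exact: ltW|exact: IH].
Qed.

Lemma q_ge0 : 0 <= 1 - rho.
Proof. by rewrite subr_ge0 ltW. Qed.

Lemma Ur_le m S : Ur m S <= (1 - rho) ^+ m.
Proof.
elim: m S => [|m IH] S; first by rewrite /= expr0; case: (_ == _); rewrite ?ler01 ?lexx.
rewrite UA_rel exprS. apply: le_trans (_ : (1 - rho) * Ur m S <= _).
- rewrite lerBlDr. apply: ler_wpDr; [exact: As_ge0|exact: lexx].
- apply: ler_wpM2l; [exact: q_ge0|exact: IH].
Qed.

Lemma As_le m S : As m S <= (1 - rho) ^+ m.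
Proof.
case: m => [|m]; first by rewrite As0 expr0; case: (_ == _); rewrite ?ler01 ?lexx.
have E : As m.+1 S = (1 - rho) * Ur m S - Ur m.+1 S by rewrite UA_rel opprB addrC subrK.
rewrite E exprS. apply: le_trans (_ : (1 - rho) * Ur m S <= _).
- rewrite lerBlDr. apply: ler_wpDr; [exact: Ur_ge0|exact: lexx].
- apply: ler_wpM2l; [exact: q_ge0|exact: Ur_le].
Qed.

Lemma As_pos k S : #|~: S| = k -> 0 < As k S.
Proof.
elim: k S => [|k IH] S Hc.
- have H : ~: S = set0 by apply: cards0_eq.
  have -> : S = setT by rewrite -[S]setCK H setC0.
  by rewrite As0 eqxx ltr01.
- have : (0 < #|~: S|)%nat by rewrite Hc.
  rewrite card_gt0 => /set0Pn [i Hi].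
  have HS : S != setT.
  { apply/negP => /eqP HS'. move: Hi. by rewrite HS' setCT inE. }
  rewrite AsS (negbTE HS) (bigD1 i) //=.
  apply: ltr_wpDr; first by apply: sumr_ge0 => j _; apply: mulr_ge0; [exact: ltW|exact: As_ge0].
  apply: mulr_gt0; first exact: Hp.
  apply: IH.
  have E : ~: (i |: S) = (~: S) :\ i by apply/setP => y; rewrite !inE negb_or.
  move: (cardsD1 i (~: S)). rewrite Hi Hc add1n E. by move=> [].
Qed.

Lemma As_pos0 : exists m, 0 < As m set0.
Proof. exists #|~: (set0 : {set 'I_n})|. by apply: As_pos. Qed.

Lemma T_eq t : rb_T_law rho p t = Fs t set0.
Proof.
rewrite /rb_T_law /Fs. apply: eq_bigl => w. rewrite /rb_first_complete /rb_state.
exact: fcr_correct.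
Qed.

Lemma prod_div (w : seq 'I_n) :
  (\prod_(i <- w) (p i / (1 - rho))) * (1 - rho) ^+ size w = \prod_(i <- w) p i.
Proof.
have Hq : 1 - rho != 0 by rewrite subr_eq0 eq_sym lt_eqF.
elim: w => [|x w IH]; first by rewrite !big_nil expr0 mulr1.
rewrite !big_cons /= exprS -IH.
by rewrite mulrACA divfK.
Qed.

Lemma C_eq k : cc_C_law rho p k * (1 - rho) ^+ k = As k set0.
Proof.
rewrite /cc_C_law /As mulr_suml. apply: eq_big => w.
- rewrite /cc_first_complete /cc_state.
  have E : forall s : seq 'I_n, [set x in s] = set0 :|: [set x in s]
    by move=> s; rewrite set0U.
  rewrite -fcc_correct set0U. congr (_ && _). apply: eq_forallb => j. by rewrite set0U.
- move=> _. by rewrite -(prod_div w) size_tuple.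
Qed.

End Comb.

Unset Implicit Arguments.
Set Strict Implicit.
Local Open Scope R_scope.

Lemma ser_psum_le (f : nat -> R) l :
  (forall t, 0 <= f t) -> is_series f l -> forall N, sum_f_R0 f N <= l.
Proof.
intros Hf Hs N. rewrite <- sum_n_Reals.
apply (is_lim_seq_incr_compare (sum_n f) l); [exact Hs|].
intros m. rewrite sum_Sn. unfold plus; simpl. specialize (Hf (S m)). lra.
Qed.

Lemma ser_ge0 (f : nat -> R) l : (forall t, 0 <= f t) -> is_series f l -> 0 <= l.
Proof.
intros Hf Hs. apply Rle_trans with (sum_f_R0 f 0). simpl; apply Hf.
now apply ser_psum_le.
Qed.

Lemma ser_term_le (f : nat -> R) l : (forall t, 0 <= f t) -> is_series f l -> forall N, f N <= l.
Proof.
intros Hf Hs N. apply Rle_trans with (sum_f_R0 f N); [|now apply ser_psum_le].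
destruct N. simpl; lra. rewrite tech5.
assert (0 <= sum_f_R0 f N). { apply cond_pos_sum. exact Hf. } lra.
Qed.

Lemma ser_dom (f : nat -> R) x : 0 <= x < 1 -> (forall t, 0 <= f t <= x ^ t) -> ex_series f.
Proof.
intros Hx Hf. apply (ex_series_le f (fun t => x ^ t)).
- intros t. change (norm (f t)) with (Rabs (f t)). rewrite Rabs_pos_eq; apply Hf.
- exists (/ (1 - x)). apply is_series_geom. rewrite Rabs_pos_eq; lra.
Qed.

Lemma ser_shift {K : AbsRing} {V : NormedModule K} (f : nat -> V) l :
  is_series f l -> is_series (fun k => match k with O => zero | S j => f j end) l.
Proof.
intros H. apply is_series_decr_1. rewrite opp_zero plus_zero_r. exact H.
Qed.

Lemma ser_uniq {K : AbsRing} {V : NormedModule K} (f : nat -> V) l l' :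
  is_series f l -> is_series f l' -> l = l'.
Proof.
intros H1 H2. exact (filterlim_locally_unique _ _ _ H1 H2).
Qed.

Lemma tri_sum (c g : nat -> R) N :
  sum_f_R0 (fun t => sum_f_R0 (fun k => c k * g (t - k)%nat) t) N =
  sum_f_R0 (fun k => c k * sum_f_R0 g (N - k)%nat) N.
Proof.
induction N as [|N IH].
- simpl. reflexivity.
- rewrite tech5 IH. rewrite (tech5 (fun k => c k * sum_f_R0 g (S N - k))).
  rewrite (tech5 (fun k => c k * g (S N - k)%nat)).
  rewrite subnn. simpl (sum_f_R0 g 0).
  rewrite (sum_eq (fun k => c k * sum_f_R0 g (S N - k))
     (fun k => c k * sum_f_R0 g (N - k) + c k * g (S N - k)%nat)).
  + rewrite (sum_plus (fun k => c k * sum_f_R0 g (N - k)) (fun k => c k * g (S N - k)%nat)). ring.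
  + intros i Hi. rewrite subSn; [|apply/ssrnat.leP; exact Hi].
    rewrite tech5. ring.
Qed.

Lemma fst_sum_n (f : nat -> C) N : fst (sum_n f N) = sum_f_R0 (fun k => fst (f k)) N.
Proof.
induction N as [|N IH].
- rewrite sum_O. reflexivity.
- rewrite sum_Sn tech5 -IH. reflexivity.
Qed.

Lemma snd_sum_n (f : nat -> C) N : snd (sum_n f N) = sum_f_R0 (fun k => snd (f k)) N.
Proof.
induction N as [|N IH].
- rewrite sum_O. reflexivity.
- rewrite sum_Sn tech5 -IH. reflexivity.
Qed.

Lemma is_series_fst (f : nat -> C) l :
  is_series f l -> is_series (fun k => fst (f k)) (fst l).
Proof.
intros H. unfold is_series in *. apply filterlim_locally. intros eps.
generalize (proj1 (filterlim_locally _ _) H eps). apply filter_imp.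
intros N [H1 _]. rewrite sum_n_Reals -fst_sum_n. exact H1.
Qed.

Lemma is_series_snd (f : nat -> C) l :
  is_series f l -> is_series (fun k => snd (f k)) (snd l).
Proof.
intros H. unfold is_series in *. apply filterlim_locally. intros eps.
generalize (proj1 (filterlim_locally _ _) H eps). apply filter_imp.
intros N [_ H1]. rewrite sum_n_Reals -snd_sum_n. exact H1.
Qed.

Lemma is_series_pair (f : nat -> C) a b :
  is_series (fun k => fst (f k)) a -> is_series (fun k => snd (f k)) b ->
  is_series f (a, b).
Proof.
intros Ha Hb. unfold is_series in *. apply filterlim_locally. intros eps.
generalize (filter_and _ _ (proj1 (filterlim_locally _ _) Ha eps)
                         (proj1 (filterlim_locally _ _) Hb eps)).
apply filter_imp. intros N [H1 H2]. split.
- change (ball a eps (fst (sum_n f N))). rewrite fst_sum_n -sum_n_Reals. exact H1.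
- change (ball b eps (snd (sum_n f N))). rewrite snd_sum_n -sum_n_Reals. exact H2.
Qed.

Lemma abs_fst_le (z : C) : Rabs (fst z) <= Cmod z.
Proof. eapply Rle_trans; [apply Rmax_l|apply Rmax_Cmod]. Qed.
Lemma abs_snd_le (z : C) : Rabs (snd z) <= Cmod z.
Proof. eapply Rle_trans; [apply Rmax_r|apply Rmax_Cmod]. Qed.

Lemma ex_series_fst_abs (x : nat -> C) :
  ex_series (fun n => Cmod (x n)) -> ex_series (fun n => Rabs (fst (x n))).
Proof.
intros H. apply (ex_series_le (K := R_AbsRing) (V := R_CompleteNormedModule) _ (fun n => Cmod (x n))); [|exact H].
intros n. change (norm (Rabs (fst (x n)))) with (Rabs (Rabs (fst (x n)))).
rewrite Rabs_Rabsolu. apply abs_fst_le.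
Qed.

Lemma ex_series_snd_abs (x : nat -> C) :
  ex_series (fun n => Cmod (x n)) -> ex_series (fun n => Rabs (snd (x n))).
Proof.
intros H. apply (ex_series_le (K := R_AbsRing) (V := R_CompleteNormedModule) _ (fun n => Cmod (x n))); [|exact H].
intros n. change (norm (Rabs (snd (x n)))) with (Rabs (Rabs (snd (x n)))).
rewrite Rabs_Rabsolu. apply abs_snd_le.
Qed.

Lemma C_cauchy (x y : nat -> C) X Y :
  is_series x X -> is_series y Y ->
  ex_series (fun n => Cmod (x n)) -> ex_series (fun n => Cmod (y n)) ->
  is_series (fun t => sum_n (fun k => (x k * y (t - k)%nat)%C) t) (X * Y)%C.
Proof.
intros HX HY AX AY.
pose proof (is_series_fst _ _ HX) as X1. pose proof (is_series_snd _ _ HX) as X2.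
pose proof (is_series_fst _ _ HY) as Y1. pose proof (is_series_snd _ _ HY) as Y2.
pose proof (ex_series_fst_abs _ AX) as AX1. pose proof (ex_series_snd_abs _ AX) as AX2.
pose proof (ex_series_fst_abs _ AY) as AY1. pose proof (ex_series_snd_abs _ AY) as AY2.
pose proof (is_series_mult _ _ _ _ X1 Y1 AX1 AY1) as M11.
pose proof (is_series_mult _ _ _ _ X2 Y2 AX2 AY2) as M22.
pose proof (is_series_mult _ _ _ _ X1 Y2 AX1 AY2) as M12.
pose proof (is_series_mult _ _ _ _ X2 Y1 AX2 AY1) as M21.
destruct X as [X1r X2r]; destruct Y as [Y1r Y2r]. simpl in *.
apply is_series_pair.
- pose proof (is_series_minus _ _ _ _ M11 M22) as H.
  eapply is_series_ext; [|exact H]. intros t.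
  cbv beta. rewrite fst_sum_n. change (plus ?a (opp ?b)) with (a - b).
  rewrite <- minus_sum. apply sum_eq. intros i _. reflexivity.
- pose proof (is_series_plus _ _ _ _ M12 M21) as H.
  eapply is_series_ext; [|exact H]. intros t.
  cbv beta. rewrite snd_sum_n. change (plus ?a ?b) with (a + b).
  rewrite sum_plus. reflexivity.
Qed.

Lemma sum_n_RtoC (f : nat -> R) (w : C) N :
  sum_n (fun k => (RtoC (f k) * w)%C) N = (RtoC (sum_f_R0 f N) * w)%C.
Proof.
induction N as [|N IH].
- rewrite sum_O. reflexivity.
- rewrite sum_Sn IH tech5 RtoC_plus. change (plus ?a ?b) with (Cplus a b). symmetry; apply Cmult_plus_distr_r.
Qed.

Lemma Cmod_Rpow (x : R) (z : C) t : Cmod (RtoC x * z ^ t)%C = Rabs x * Cmod z ^ t.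
Proof. rewrite Cmod_mult Cmod_R Cmod_pow. reflexivity. Qed.

Lemma Cmod_sum_le (f : nat -> C) N : Cmod (sum_n f N) <= sum_f_R0 (fun k => Cmod (f k)) N.
Proof.
induction N as [|N IH].
- rewrite sum_O. simpl. lra.
- rewrite sum_Sn tech5. change (plus ?a ?b) with (Cplus a b).
  eapply Rle_trans; [apply Cmod_triangle|]. lra.
Qed.

Lemma Cmod_series_le (f : nat -> C) l L :
  is_series f l -> is_series (fun k => Cmod (f k)) L -> Cmod l <= L.
Proof.
intros H1 H2.
assert (E1 : is_lim_seq (fun N => Cmod (sum_n f N)) (Cmod l)).
{ unfold is_lim_seq. eapply filterlim_comp; [exact H1|]. apply (filterlim_norm (K := C_AbsRing) (V := C_NormedModule)). }
assert (E2 : is_lim_seq (sum_n (fun k => Cmod (f k))) L) by exact H2.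
pose proof (is_lim_seq_le _ _ _ _ (fun N => Rle_trans _ _ _ (Cmod_sum_le f N) (Req_le _ _ (Logic.eq_sym (sum_n_Reals _ N)))) E1 E2) as H.
exact H.
Qed.

Lemma Cm4 (b T zk zt : C) : (b * zk * (T * zt) = b * T * (zk * zt))%C.
Proof. ring. Qed.

Definition beta (rho : R) (u : nat -> R) (k : nat) : R :=
  match k with O => 0 | S j => rho * u j end.

Section Main.
Variables (rho : R) (a u T : nat -> R).
Hypothesis Hrho : 0 < rho < 1.
Hypothesis Ha : forall t, 0 <= a t <= (1 - rho) ^ t.
Hypothesis Hu : forall t, 0 <= u t <= (1 - rho) ^ t.
Hypothesis HT : forall t, 0 <= T t.
Hypothesis HTr : forall t, T t = a t + sum_f_R0 (fun k => beta rho u k * T (t - k)%nat) t.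
Hypothesis Hu0 : u 0%nat = 1 - a 0%nat.
Hypothesis HuS : forall m, u (S m) = (1 - rho) * u m - a (S m).

Lemma ex_a (r : R) : 0 <= r -> (1 - rho) * r < 1 -> ex_series (fun t => a t * r ^ t).
Proof.
intros Hr Hq. apply (ser_dom _ ((1 - rho) * r)).
- split; [apply Rmult_le_pos; lra|lra].
- intros t. rewrite Rpow_mult_distr. specialize (Ha t). split.
  + apply Rmult_le_pos; [lra|apply pow_le; lra].
  + apply Rmult_le_compat_r; [apply pow_le; lra|lra].
Qed.

Lemma ex_u (r : R) : 0 <= r -> (1 - rho) * r < 1 -> ex_series (fun t => u t * r ^ t).
Proof.
intros Hr Hq. apply (ser_dom _ ((1 - rho) * r)).
- split; [apply Rmult_le_pos; lra|lra].
- intros t. rewrite Rpow_mult_distr. specialize (Hu t). split.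
  + apply Rmult_le_pos; [lra|apply pow_le; lra].
  + apply Rmult_le_compat_r; [apply pow_le; lra|lra].
Qed.

Lemma beta_ge0 k : 0 <= beta rho u k.
Proof. destruct k; simpl. lra. apply Rmult_le_pos; [lra|apply Hu]. Qed.

Lemma beta_series (r Ur : R) : is_series (fun t => u t * r ^ t) Ur ->
  is_series (fun k => beta rho u k * r ^ k) (rho * r * Ur).
Proof.
intros H. pose proof (ser_shift _ _ (is_series_scal_l (rho * r) _ _ H)) as H2.
eapply is_series_ext; [|exact H2]. intros [|k]; simpl.
- change (@zero R_NormedModule) with 0. ring.
- change (scal (rho * r) (u k * r ^ k)) with ((rho * r) * (u k * r ^ k)). ring.
Qed.

Lemma renewal_r (r : R) t :
  T t * r ^ t = a t * r ^ t +
    sum_f_R0 (fun k => (beta rho u k * r ^ k) * (T (t - k)%nat * r ^ (t - k)%nat)) t.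
Proof.
rewrite HTr Rmult_plus_distr_r. f_equal. rewrite Rmult_comm scal_sum. apply sum_eq.
intros k Hk.
assert (E : r ^ t = r ^ k * r ^ (t - k)%nat).
{ rewrite <- pow_add. f_equal. symmetry. apply (subnKC (m := k) (n := t)). apply/ssrnat.leP; exact Hk. }
rewrite E. ring.
Qed.

Lemma renewal_C (z : C) t :
  (RtoC (T t) * z ^ t)%C = (RtoC (a t) * z ^ t +
    sum_n (fun k => (RtoC (beta rho u k) * z ^ k) * (RtoC (T (t - k)%nat) * z ^ (t - k)%nat)) t)%C.
Proof.
rewrite (sum_n_ext_loc _ (fun k => RtoC (beta rho u k * T (t - k)%nat) * z ^ t)%C).
- rewrite sum_n_RtoC -Cmult_plus_distr_r -RtoC_plus -HTr. reflexivity.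
- intros k Hk.
  assert (E : (z ^ t = z ^ k * z ^ (t - k)%nat)%C).
  { rewrite <- Cpow_add_r. f_equal. symmetry. apply (subnKC (m := k) (n := t)). apply/ssrnat.leP; exact Hk. }
  rewrite E RtoC_mult. apply Cm4.
Qed.

Lemma T_bound (r Ar Ur : R) : 0 <= r ->
  is_series (fun t => a t * r ^ t) Ar -> is_series (fun t => u t * r ^ t) Ur ->
  rho * r * Ur < 1 -> ex_series (fun t => T t * r ^ t).
Proof.
intros Hr HA HU HB.
set (g := fun t => T t * r ^ t).
set (c := fun k => beta rho u k * r ^ k).
assert (Hc : is_series c (rho * r * Ur)) by (apply beta_series; exact HU).
assert (Hc0 : forall k, 0 <= c k).
{ intros k; unfold c. apply Rmult_le_pos; [apply beta_ge0|apply pow_le; lra]. }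
assert (Hg0 : forall t, 0 <= g t).
{ intros t; unfold g. apply Rmult_le_pos; [apply HT|apply pow_le; lra]. }
assert (HA0 : forall t, 0 <= a t * r ^ t).
{ intros t. apply Rmult_le_pos; [apply Ha|apply pow_le; lra]. }
assert (HG : forall N, sum_f_R0 g N = sum_f_R0 (fun t => a t * r ^ t) N +
          sum_f_R0 (fun k => c k * sum_f_R0 g (N - k)%nat) N).
{ intros N. rewrite <- tri_sum. rewrite <- sum_plus. apply sum_eq. intros t _.
  unfold g, c. apply renewal_r. }
assert (HUr0 : 0 <= Ur).
{ apply (ser_ge0 _ _ (fun t => Rmult_le_pos _ _ (proj1 (Hu t)) (pow_le r t Hr)) HU). }
assert (HAr0 : 0 <= Ar) by exact (ser_ge0 _ _ HA0 HA).
assert (HB0 : 0 <= rho * r * Ur).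
{ apply Rmult_le_pos; [apply Rmult_le_pos; lra|exact HUr0]. }
set (M := Ar / (1 - rho * r * Ur)).
assert (HM : Ar + rho * r * Ur * M = M). { unfold M. field. lra. }
assert (HM0 : 0 <= M). { unfold M. apply Rdiv_le_0_compat; lra. }
assert (key : forall N, sum_f_R0 g N <= M).
{ intros N. induction N as [N IH] using Wf_nat.lt_wf_ind.
  rewrite HG.
  assert (H1 : sum_f_R0 (fun t => a t * r ^ t) N <= Ar) by (apply ser_psum_le; assumption).
  assert (H2 : sum_f_R0 (fun k => c k * sum_f_R0 g (N - k)%nat) N <= sum_f_R0 (fun k => c k * M) N).
  { apply sum_Rle. intros [|k] Hk.
    - unfold c; simpl. lra.
    - apply Rmult_le_compat_l; [apply Hc0|]. apply IH.
      apply/ssrnat.ltP. rewrite ltn_subrL /=. move/ssrnat.leP: Hk => Hk. exact: leq_trans Hk. }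
  assert (H3 : sum_f_R0 (fun k => c k * M) N <= rho * r * Ur * M).
  { rewrite <- scal_sum. rewrite Rmult_comm. apply Rmult_le_compat_r; [exact HM0|].
    apply ser_psum_le; assumption. }
  lra. }
assert (Hex : ex_finite_lim_seq (sum_n g)).
{ apply (ex_finite_lim_seq_incr _ M).
  - intros n. rewrite sum_Sn. change (plus ?x ?y) with (x + y). specialize (Hg0 (S n)). lra.
  - intros n. rewrite sum_n_Reals. apply key. }
destruct Hex as [l Hl]. exists l. exact Hl.
Qed.

Lemma UA_C (z : C) (A U : C) :
  is_series (fun t => RtoC (a t) * z ^ t)%C A ->
  is_series (fun t => RtoC (u t) * z ^ t)%C U ->
  @eq C ((1 - RtoC (1 - rho) * z) * U)%C (1 - A)%C.
Proof.
intros HA HU.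
set (f := fun t => (RtoC (u t) * z ^ t)%C).
assert (H1 : is_series (fun t => f (S t)) (U - f 0%nat)%C).
{ apply is_series_incr_1.
  assert (E : @eq C (plus (U - f 0%nat)%C (f 0%nat)) U).
  { change (@eq C (Cplus (Cminus U (f 0%nat)) (f 0%nat)) U). ring. }
  rewrite E. exact HU. }
assert (H2 : is_series (fun t => RtoC (a (S t)) * z ^ (S t))%C (A - RtoC (a 0%nat) * z ^ 0)%C).
{ apply (is_series_incr_1 (fun t => RtoC (a t) * z ^ t)%C).
  assert (E : @eq C (plus (A - RtoC (a 0%nat) * z ^ 0)%C (RtoC (a 0%nat) * z ^ 0)%C) A).
  { change (@eq C (Cplus (Cminus A (RtoC (a 0%nat) * z ^ 0)) (RtoC (a 0%nat) * z ^ 0)) A). ring. }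
  rewrite E. exact HA. }
assert (H3 : is_series (fun t => (RtoC (1 - rho) * z) * f t)%C ((RtoC (1 - rho) * z) * U)%C).
{ exact (is_series_scal_l (K := C_AbsRing) (V := C_NormedModule) _ _ _ HU). }
pose proof (is_series_minus _ _ _ _ H3 H2) as H4.
assert (H5 : is_series (fun t => f (S t)) (plus ((RtoC (1 - rho) * z) * U)%C
              (opp (A - RtoC (a 0%nat) * z ^ 0)%C))).
{ eapply is_series_ext; [|exact H4]. intros t. unfold f.
  change (@eq C (Cplus (Cmult (Cmult (RtoC (1 - rho)) z) (RtoC (u t) * z ^ t))
     (Copp (RtoC (a (S t)) * z ^ (S t))%C)) (RtoC (u (S t)) * z ^ (S t))%C).
  rewrite HuS (RtoC_minus ((1 - rho) * u t)) (RtoC_mult (1 - rho) (u t)). simpl. ring. }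
pose proof (ser_uniq _ _ _ H1 H5) as E.
change (@eq C (Cminus U (f 0%nat)) (Cplus (Cmult (Cmult (RtoC (1 - rho)) z) U)
   (Copp (Cminus A (Cmult (RtoC (a 0%nat)) (Cpow z 0)))))) in E.
unfold f in E. rewrite Hu0 RtoC_minus in E. simpl in E.
apply Ceq_minus in E.
change (@eq C ((1 - RtoC (1 - rho) * z) * U)%C (1 - A)%C).
apply Ceq_minus. rewrite <- E. ring.
Qed.

Lemma C_neq1 (w : C) : Cmod w < 1 -> (RtoC 1 - w)%C <> RtoC 0.
Proof.
intros Hw E. assert (w = RtoC 1).
{ apply Ceq_minus in E. symmetry. exact E. }
subst w. rewrite Cmod_1 in Hw. lra.
Qed.

Lemma main_C (z : C) (Ar Ur : R) :
  (1 - rho) * Cmod z < 1 ->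
  is_series (fun t => a t * Cmod z ^ t) Ar ->
  is_series (fun t => u t * Cmod z ^ t) Ur ->
  rho * Cmod z * Ur < 1 ->
  exists A : C, is_series (fun t => RtoC (a t) * z ^ t)%C A /\ is_series (fun t => Cmult (RtoC (T t)) (Cpow z t))
      (Cdiv (Cmult (Cminus (RtoC 1) (Cmult (RtoC (1 - rho)) z)) A)
            (Cplus (Cminus (RtoC 1) z) (Cmult (Cmult (RtoC rho) z) A))).
Proof.
intros Hq HAr HUr HB.
set (r := Cmod z) in *.
assert (Hr : 0 <= r) by apply Cmod_ge_0.
assert (HTr' : ex_series (fun t => T t * r ^ t)) by exact (T_bound r Ar Ur Hr HAr HUr HB).
assert (Ncm : forall (f : nat -> R), (forall t, 0 <= f t) -> forall t,
   Cmod (RtoC (f t) * z ^ t)%C = f t * r ^ t).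
{ intros f Hf t. rewrite Cmod_Rpow Rabs_pos_eq; [reflexivity|apply Hf]. }
assert (Hex : forall (f : nat -> R), (forall t, 0 <= f t) -> ex_series (fun t => f t * r ^ t) ->
    ex_series (fun t => RtoC (f t) * z ^ t)%C).
{ intros f Hf He. apply (ex_series_le (K := C_AbsRing) (V := C_CompleteNormedModule) _ _ (fun t => Req_le _ _ (Ncm f Hf t)) He). }
assert (Ha0 : forall t, 0 <= a t) by (intros t; apply Ha).
assert (Hu0' : forall t, 0 <= u t) by (intros t; apply Hu).
destruct (Hex a Ha0 (ex_intro _ Ar HAr)) as [A HA].
destruct (Hex u Hu0' (ex_intro _ Ur HUr)) as [U HU].
destruct (Hex T HT HTr') as [L HL].
exists A. split; [exact HA|].
set (bz := fun k => (RtoC (beta rho u k) * z ^ k)%C).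
assert (HBs : is_series bz (RtoC rho * z * U)%C).
{ pose proof (ser_shift _ _ (is_series_scal_l (K := C_AbsRing) (V := C_NormedModule) (RtoC rho * z)%C _ _ HU)) as H.
  eapply is_series_ext; [|exact H]. intros [|k]; unfold bz; simpl.
  - change (@eq C (RtoC 0) (RtoC 0 * RtoC 1)%C). ring.
  - change (@eq C (RtoC rho * z * (RtoC (u k) * z ^ k))%C (RtoC (rho * u k) * (z * z ^ k))%C).
    rewrite RtoC_mult. ring. }
assert (Hbabs : ex_series (fun n => Cmod (bz n))).
{ exists (rho * r * Ur). eapply is_series_ext; [|exact (beta_series r Ur HUr)].
  intros k. unfold bz. symmetry. apply (Ncm (beta rho u) beta_ge0). }
assert (HTabs : ex_series (fun n => Cmod (RtoC (T n) * z ^ n)%C)).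
{ destruct HTr' as [lT HlT]. exists lT. eapply is_series_ext; [|exact HlT].
  intros k. symmetry. apply (Ncm T HT). }
pose proof (C_cauchy _ _ _ _ HBs HL Hbabs HTabs) as Hconv.
pose proof (is_series_plus _ _ _ _ HA Hconv) as Hsum.
assert (HL2 : is_series (fun t => RtoC (T t) * z ^ t)%C (plus A (RtoC rho * z * U * L)%C)).
{ eapply is_series_ext; [|exact Hsum]. intros t. symmetry. unfold bz. apply renewal_C. }
pose proof (ser_uniq _ _ _ HL HL2) as EL.
change (@eq C L (A + RtoC rho * z * U * L)%C) in EL.
assert (HUn : Cmod U <= Ur).
{ apply (Cmod_series_le _ _ _ HU). eapply is_series_ext; [|exact HUr].
  intros t. symmetry. apply (Ncm u Hu0'). }
assert (HBn : Cmod (RtoC rho * z * U)%C < 1).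
{ rewrite !Cmod_mult Cmod_R Rabs_pos_eq; [|lra]. fold r.
  apply Rle_lt_trans with (rho * r * Ur); [|exact HB].
  apply Rmult_le_compat_l; [apply Rmult_le_pos; lra|exact HUn]. }
assert (HqZ : Cmod (RtoC (1 - rho) * z)%C < 1).
{ rewrite Cmod_mult Cmod_R Rabs_pos_eq; [|lra]. exact Hq. }
pose proof (C_neq1 _ HBn) as NB.
pose proof (C_neq1 _ HqZ) as NQ.
pose proof (UA_C z A U HA HU) as EU.
assert (ED : @eq C (Cplus (Cminus (RtoC 1) z) (Cmult (Cmult (RtoC rho) z) A))
               ((RtoC 1 - RtoC (1 - rho) * z) * (RtoC 1 - RtoC rho * z * U))%C).
{ apply Ceq_minus. rewrite RtoC_minus.
  transitivity (RtoC rho * z * ((1 - (RtoC 1 - RtoC rho) * z) * U - (1 - A)))%C; [ring|].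
  rewrite RtoC_minus in EU. rewrite EU. ring. }
assert (EV : @eq C (Cdiv (Cmult (Cminus (RtoC 1) (Cmult (RtoC (1 - rho)) z)) A)
            (Cplus (Cminus (RtoC 1) z) (Cmult (Cmult (RtoC rho) z) A))) L).
{ rewrite ED. apply Ceq_minus in EL.
  transitivity (L - (L - (A + RtoC rho * z * U * L)) / (RtoC 1 - RtoC rho * z * U))%C.
  - field. split; assumption.
  - rewrite EL. field. exact NB. }
rewrite EV. exact HL.
Qed.

Lemma is_series_RtoC (f : nat -> R) l :
  is_series f l -> is_series (fun k => RtoC (f k)) (RtoC l).
Proof.
intros H. apply is_series_pair.
- exact H.
- pose proof (is_series_scal_l (K := R_AbsRing) (V := R_NormedModule) 0 _ _ H) as H0.
  assert (E0 : scal 0 l = 0) by (change (0 * l = 0); ring).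
  rewrite E0 in H0. eapply is_series_ext; [|exact H0].
  intros k. change (scal 0 (f k) = 0). change (0 * f k = 0). ring.
Qed.

Lemma real_UA (r Ar Ur : R) : 0 <= r -> (1 - rho) * r < 1 ->
  is_series (fun t => a t * r ^ t) Ar -> is_series (fun t => u t * r ^ t) Ur ->
  (1 - (1 - rho) * r) * Ur = 1 - Ar.
Proof.
intros Hr Hq HA HU.
assert (EA : is_series (fun t => RtoC (a t) * (RtoC r) ^ t)%C (RtoC Ar)).
{ eapply is_series_ext; [|exact (is_series_RtoC _ _ HA)]. intros t.
  cbv beta. rewrite RtoC_mult RtoC_pow. reflexivity. }
assert (EU : is_series (fun t => RtoC (u t) * (RtoC r) ^ t)%C (RtoC Ur)).
{ eapply is_series_ext; [|exact (is_series_RtoC _ _ HU)]. intros t.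
  cbv beta. rewrite RtoC_mult RtoC_pow. reflexivity. }
pose proof (UA_C (RtoC r) _ _ EA EU) as E.
apply RtoC_inj. rewrite RtoC_mult !RtoC_minus RtoC_mult. exact E.
Qed.

Lemma Bcond (r Ar Ur : R) : 0 <= r -> (1 - rho) * r < 1 ->
  is_series (fun t => a t * r ^ t) Ar -> is_series (fun t => u t * r ^ t) Ur ->
  0 < 1 - r + rho * r * Ar -> rho * r * Ur < 1.
Proof.
intros Hr Hq HA HU Hpos.
pose proof (real_UA r Ar Ur Hr Hq HA HU) as E.
assert (E2 : rho * r * Ur * (1 - (1 - rho) * r) = rho * r * (1 - Ar)).
{ rewrite <- E. ring. }
assert (H1 : rho * r * (1 - Ar) < 1 - (1 - rho) * r) by lra.
apply (Rmult_lt_reg_r (1 - (1 - rho) * r)); [lra|]. lra.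
Qed.

Variable c : nat -> R.
Hypothesis Hc : forall k, c k * (1 - rho) ^ k = a k.
Hypothesis Hpos : exists m, 0 < a m.

Theorem analytic_main :
  (forall z : C, (Cmod z <= 1)%R ->
     exists phi : C,
       is_series (fun k => Cmult (RtoC (c k))
                                 (Cpow (Cmult (RtoC (1 - rho)%R) z) k)) phi /\
       is_series (fun t => Cmult (RtoC (T t)) (Cpow z t))
         (Cdiv (Cmult (Cminus (RtoC 1) (Cmult (RtoC (1 - rho)%R) z)) phi)
               (Cplus (Cminus (RtoC 1) z) (Cmult (Cmult (RtoC rho) z) phi)))) /\
  (forall z : R, (0 <= z)%R -> ((1 - rho) * z < 1)%R ->
     exists phi : R,
       is_series (fun k => (c k * ((1 - rho) * z) ^ k)%R) phi /\
       ((0 < 1 - z + rho * z * phi)%R ->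
        is_series (fun t => (T t * z ^ t)%R)
          ((1 - (1 - rho) * z) * phi / (1 - z + rho * z * phi))%R)).
Proof.
split.
- intros z Hz. set (r := Cmod z).
  assert (Hr : 0 <= r) by apply Cmod_ge_0.
  assert (Hq : (1 - rho) * r < 1).
  { apply Rle_lt_trans with (1 - rho). rewrite <- (Rmult_1_r (1 - rho)) at 2.
    apply Rmult_le_compat_l; [lra|exact Hz]. lra. }
  destruct (ex_a r Hr Hq) as [Ar HAr]. destruct (ex_u r Hr Hq) as [Ur HUr].
  assert (HB : rho * r * Ur < 1).
  { apply (Bcond r Ar Ur Hr Hq HAr HUr).
    destruct (Rle_lt_or_eq_dec r 1 Hz) as [Hlt|Heq].
    - assert (0 <= rho * r * Ar).
      { apply Rmult_le_pos; [apply Rmult_le_pos; lra|].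
        apply (ser_ge0 _ _ (fun t => Rmult_le_pos _ _ (proj1 (Ha t)) (pow_le r t Hr)) HAr). }
      lra.
    - destruct Hpos as [m Hm].
      pose proof (ser_term_le _ _ (fun t => Rmult_le_pos _ _ (proj1 (Ha t)) (pow_le r t Hr)) HAr m) as Hle.
      rewrite Heq pow1 Rmult_1_r in Hle. rewrite Heq. nra. }
  destruct (main_C z Ar Ur Hq HAr HUr HB) as [A [HA HT']].
  exists A. split; [|exact HT'].
  eapply is_series_ext; [|exact HA]. intros k.
  rewrite Cpow_mult_l -RtoC_pow -(Hc k) RtoC_mult. change (@eq C (RtoC (c k) * RtoC ((1 - rho) ^ k) * z ^ k)%C
     (RtoC (c k) * (RtoC ((1 - rho) ^ k) * z ^ k))%C). ring.
- intros z Hz Hq.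
  destruct (ex_a z Hz Hq) as [Ar HAr]. destruct (ex_u z Hz Hq) as [Ur HUr].
  exists Ar. split.
  { eapply is_series_ext; [|exact HAr]. intros k. rewrite Rpow_mult_distr -(Hc k). apply Rmult_assoc. }
  intros Hpos'.
  pose proof (Bcond z Ar Ur Hz Hq HAr HUr Hpos') as HB.
  assert (Ecm : Cmod (RtoC z) = z) by (rewrite Cmod_R; apply Rabs_pos_eq; exact Hz).
  assert (HAr' : is_series (fun t => a t * Cmod (RtoC z) ^ t) Ar) by (rewrite Ecm; exact HAr).
  assert (HUr' : is_series (fun t => u t * Cmod (RtoC z) ^ t) Ur) by (rewrite Ecm; exact HUr).
  rewrite <- Ecm in Hq, HB.
  destruct (main_C (RtoC z) Ar Ur Hq HAr' HUr' HB) as [A [HA HT']].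
  assert (EA : A = RtoC Ar).
  { apply (ser_uniq _ _ _ HA). eapply is_series_ext; [|exact (is_series_RtoC _ _ HAr)].
    intros t. cbv beta. rewrite RtoC_mult RtoC_pow. reflexivity. }
  rewrite EA in HT'.
  pose proof (is_series_fst _ _ HT') as H1.
  assert (EV : ((1 - (1 - rho) * z) * Ar / (1 - z + rho * z * Ar)) =
     fst (Cdiv (Cmult (Cminus (RtoC 1) (Cmult (RtoC (1 - rho)) (RtoC z))) (RtoC Ar))
            (Cplus (Cminus (RtoC 1) (RtoC z)) (Cmult (Cmult (RtoC rho) (RtoC z)) (RtoC Ar))))).
  { rewrite <- (RtoC_mult (1 - rho) z), <- (RtoC_minus 1 ((1 - rho) * z)),
      <- (RtoC_mult (1 - (1 - rho) * z) Ar), <- (RtoC_mult rho z), <- (RtoC_mult (rho * z) Ar),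
      <- (RtoC_minus 1 z), <- (RtoC_plus (1 - z) (rho * z * Ar)), <- RtoC_div; [reflexivity|lra]. }
  rewrite EV. eapply is_series_ext; [|exact H1]. intros t. cbv beta.
  rewrite <- RtoC_pow, <- RtoC_mult. reflexivity.
Qed.

End Main.


Section ConvSum.
Local Open Scope ring_scope.
Lemma conv_sum (g : nat -> R) t : g 0%nat = 0 ->
  sum_f_R0 g t = \sum_(j < t) g j.+1.
Proof.
intros H0. induction t as [|t IH].
- simpl. rewrite big_ord0. exact H0.
- rewrite tech5 IH big_ord_recr /=. reflexivity.
Qed.
End ConvSum.


Theorem mainTheorem9 (n : nat) (rho : R) (p : 'I_n -> R) :
  rb_model rho p ->
  (* complex part: |z| <= 1 *)
  (forall z : C, (Cmod z <= 1)%R ->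
     exists phi : C,
       is_series (fun k => Cmult (RtoC (cc_C_law rho p k))
                                 (Cpow (Cmult (RtoC (1 - rho)%R) z) k)) phi /\
       is_series (fun t => Cmult (RtoC (rb_T_law rho p t)) (Cpow z t))
         (Cdiv (Cmult (Cminus (RtoC 1) (Cmult (RtoC (1 - rho)%R) z)) phi)
               (Cplus (Cminus (RtoC 1) z) (Cmult (Cmult (RtoC rho) z) phi)))) /\
  (* real part: z >= 0, q z < 1, 1 - z + rho z phi(q z) > 0 *)
  (forall z : R, (0 <= z)%R -> ((1 - rho) * z < 1)%R ->
     exists phi : R,
       is_series (fun k => (cc_C_law rho p k * ((1 - rho) * z) ^ k)%R) phi /\
       ((0 < 1 - z + rho * z * phi)%R ->
        is_series (fun t => (rb_T_law rho p t * z ^ t)%R)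
          ((1 - (1 - rho) * z) * phi / (1 - z + rho * z * phi))%R)).
Proof.
intros [Hn [Hr [Hp Hsum]]].
move/andP: Hr => [Hr0 Hr1].
have Hr0' : (0 < rho)%R by apply/RltP.
have Hr1' : (rho < 1)%R by apply/RltP.
apply: (analytic_main rho (fun t => As p t set0) (fun m => Ur p m set0) (rb_T_law rho p)).
- lra.
- intros t. split; apply/RleP; [exact: As_ge0|]. rewrite RpowE. exact: As_le.
- intros t. split; apply/RleP; [exact: Ur_ge0|]. rewrite RpowE. exact: (Ur_le Hsum).
- intros t. apply/RleP. rewrite T_eq. exact: Fs_ge0.
- intros t. rewrite conv_sum; [|simpl; apply Rmult_0_l].
  rewrite T_eq renewal. congr (_ + _). apply: eq_bigr => j _. by rewrite T_eq.
- exact: UA0.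
- intros m. exact: (UA_rel Hsum).
- intros k. rewrite RpowE. exact: C_eq.
- destruct (As_pos0 Hp) as [m Hm]. exists m. by apply/RltP.
Qed.
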